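(* Let $n\ge2$ and let $r:(0,1]\to[0,\infty)$ be continuous with $r(1)=0$, $\lim_{t\to0^+}r(t)=\infty$ and $r(t)>0$ for all $t\in(0,1)$. Then the map $F:\mathcal K_0^n\times[0,1]\to\mathcal K_0^n$ defined by $F(K,0)=K$ and $F(K,t)=K\cap r(t)\mathbb B$ for $t\in(0,1]$ is continuous (with $\mathcal K_0^n$ carrying the metric $d_{AW}$).
   Context: $\mathbb R^n$ carries the Euclidean norm $\|\cdot\|$ with closed unit ball $\mathbb B$; $d(x,A)=\inf_{a\in A}\|x-a\|$. $\mathcal K^n$ is the family of nonempty closed convex subsets of $\mathbb R^n$, $\mathcal K_0^n$ those containing $0$. The Attouch–Wets metric is $d_{AW}(A,K)=\sup_{j\in\mathbb N}\min\{\frac1j,\sup_{\|x\|<j}|d(x,A)-d(x,K)|\}$. *)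

(* Defs.v *)
From HB Require Import structures.
From mathcomp Require Import all_boot all_order all_algebra.
From mathcomp Require Import all_classical all_reals all_analysis.
Set Implicit Arguments. Unset Strict Implicit. Unset Printing Implicit Defensive.
Import Order.TTheory GRing.Theory Num.Theory.
Import numFieldNormedType.Exports.
Local Open Scope classical_set_scope.
Local Open Scope ring_scope.

Definition enorm (R : realType) (n : nat) (x : 'rV[R]_n) : R :=
  Num.sqrt (\sum_(i < n) x ord0 i ^+ 2).

Definition unit_ball (R : realType) (n : nat) : set 'rV[R]_n :=
  [set x | enorm x <= 1].

Definition scaled_ball (R : realType) (n : nat) (c : R) : set 'rV[R]_n :=
  [set c *: b | b in @unit_ball R n].

Definition dist_set (R : realType) (n : nat) (x : 'rV[R]_n) (A : set 'rV[R]_n) : R :=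
  inf [set enorm (x - a) | a in A].

Definition eclosed (R : realType) (n : nat) (A : set 'rV[R]_n) : Prop :=
  forall x, (forall e : R, 0 < e -> exists2 a, A a & enorm (x - a) < e) -> A x.

Definition convex_set_R (R : realType) (n : nat) (A : set 'rV[R]_n) : Prop :=
  forall a b, A a -> A b -> forall t : R, 0 <= t <= 1 ->
    A (t *: a + (1 - t) *: b).

Definition Kn (R : realType) (n : nat) (A : set 'rV[R]_n) : Prop :=
  A !=set0 /\ eclosed A /\ convex_set_R A.

Definition K0n (R : realType) (n : nat) (A : set 'rV[R]_n) : Prop :=
  Kn A /\ A 0.

Definition dAW (R : realType) (n : nat) (A K : set 'rV[R]_n) : \bar R :=
  ereal_sup [set Order.min ((j%:R)^-1 : R)%:E
                  (ereal_sup [set (`| dist_set x A - dist_set x K |)%:E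
                             | x in [set x : 'rV[R]_n | enorm x < j%:R]])
            | j in [set j : nat | (1 <= j)%N]].

Definition Fmap (R : realType) (n : nat) (r : R -> R) (K : set 'rV[R]_n) (t : R)
  : set 'rV[R]_n :=
  if t == 0 then K else K `&` @scaled_ball R n (r t).

(* Main.v *)
Require Import Defs.
From HB Require Import structures.
From mathcomp Require Import all_boot all_order all_algebra.
From mathcomp Require Import all_classical all_reals all_analysis.
From mathcomp Require Import ring lra.
Import Order.TTheory GRing.Theory Num.Theory.
Import numFieldNormedType.Exports.
Local Open Scope classical_set_scope.
Local Open Scope ring_scope.

Lemma cont_eps (R : realType) (r : R -> R) (A : set R) t :
  {within A, continuous r} -> A t -> forall e : R, 0 < e ->
  exists2 g : R, 0 < g & forall t', A t' -> `|t - t'| < g -> `|r t - r t'| < e.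
Proof.
move=> rc At e e0.
have := @cvgr_dist_lt _ _ _ _ _ (from_subspace A r) (r t) (rc t) e. move=> /(_ _ e0).
move=> H.
have : within A (nbhs t) (fun t0 => `|r t - r t0| < e).
  rewrite (nbhs_subspace_in At). exact: H.
rewrite /within /=.
move=> /nbhs_ballP [g g0 Hg].
exists g => // t' At' tt'.
have := Hg t'. rewrite /ball /= => /(_ tt' At').
done.
Qed.

Lemma lim_eps (R : realType) (r : R -> R) :
  r x @[x --> 0^'+] --> +oo -> forall M : R,
  exists2 g : R, 0 < g & forall t', 0 < t' < g -> M <= r t'.
Proof.
move=> /cvgryPge H M.
have := H M.
move=> /nbhs_ballP [g g0 Hg].
exists g => // t' /andP[t0 tg].
apply: Hg => //=. rewrite /ball /= sub0r normrN gtr0_norm //.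
Qed.

Section Enorm.
Context {R : realType} {n : nat}.
Implicit Types x y z : 'rV[R]_n.

Lemma sum_sq_lin (X Y : 'I_n -> R) (a b : R) :
  \sum_i (a * X i - b * Y i) ^+ 2 =
  a ^+ 2 * \sum_i X i ^+ 2 - 2 * a * b * \sum_i (X i * Y i) + b ^+ 2 * \sum_i Y i ^+ 2.
Proof.
rewrite !mulr_sumr -sumrB -big_split /=.
by apply: eq_bigr => i _; ring.
Qed.

Lemma CS (X Y : 'I_n -> R) :
  (\sum_i (X i * Y i)) ^+ 2 <= (\sum_i X i ^+ 2) * (\sum_i Y i ^+ 2).
Proof.
set xx := \sum_i X i ^+ 2; set yy := \sum_i Y i ^+ 2; set xy := \sum_i (X i * Y i).
have yy0 : 0 <= yy by apply: sumr_ge0 => i _; exact: sqr_ge0.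
have xx0 : 0 <= xx by apply: sumr_ge0 => i _; exact: sqr_ge0.
have [yyz|yyp] := eqVneq yy 0.
  have Y0 : forall i, Y i = 0.
    move=> i; move/eqP: yyz; rewrite psumr_eq0; last by move=> j _; exact: sqr_ge0.
    move=> /allP /(_ i (mem_index_enum i)) /=; by rewrite sqrf_eq0 => /eqP.
  have -> : xy = 0 by rewrite /xy big1 // => i _; rewrite Y0 mulr0.
  rewrite expr0n /=; exact: mulr_ge0.
have yypos : 0 < yy by rewrite lt_def yyp yy0.
have : 0 <= \sum_i (yy * X i - xy * Y i) ^+ 2 by apply: sumr_ge0 => i _; exact: sqr_ge0.
rewrite sum_sq_lin -/xx -/yy -/xy => H.
have : 0 <= yy * (yy * xx - xy ^+ 2) by move: H; congr (0 <= _); ring.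
by rewrite pmulr_rge0 // subr_ge0 mulrC.
Qed.

Definition ent x := fun i : 'I_n => x ord0 i.

Lemma enormE x : enorm x = Num.sqrt (\sum_i ent x i ^+ 2).
Proof. by []. Qed.

Lemma enorm_ge0 x : 0 <= enorm x.
Proof. exact: sqrtr_ge0. Qed.

Lemma sumsq_ge0 x : 0 <= \sum_i ent x i ^+ 2.
Proof. by apply: sumr_ge0 => i _; exact: sqr_ge0. Qed.

Lemma enorm_sq x : enorm x ^+ 2 = \sum_i ent x i ^+ 2.
Proof. by rewrite enormE sqr_sqrtr // sumsq_ge0. Qed.

Lemma enormZ (c : R) x : enorm (c *: x) = `|c| * enorm x.
Proof.
rewrite !enormE -sqrtr_sqr -sqrtrM ?sqr_ge0 // mulr_sumr; congr Num.sqrt.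
by apply: eq_bigr => i _; rewrite /ent mxE exprMn.
Qed.

Lemma enorm0 : enorm (0 : 'rV[R]_n) = 0.
Proof. by rewrite -(scale0r (0 : 'rV[R]_n)) enormZ normr0 mul0r. Qed.

Lemma enormN x : enorm (- x) = enorm x.
Proof. by rewrite -scaleN1r enormZ normrN normr1 mul1r. Qed.

Lemma enormB x y : enorm (x - y) = enorm (y - x).
Proof. by rewrite -opprB enormN. Qed.

Lemma enormD x y : enorm (x + y) <= enorm x + enorm y.
Proof.
have h : 0 <= enorm x + enorm y by rewrite addr_ge0 // enorm_ge0.
rewrite -(ler_sqr (x:=enorm (x+y))) ?nnegrE ?enorm_ge0 //.
rewrite !enorm_sq sqrrD !enorm_sq.
have -> : \sum_i ent (x + y) i ^+ 2 =
   \sum_i ent x i ^+ 2 + 2 * \sum_i (ent x i * ent y i) + \sum_i ent y i ^+ 2.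
  rewrite mulr_sumr -!big_split /=; apply: eq_bigr => i _; rewrite /ent mxE; ring.
rewrite -addrA -[X in _ <= X]addrA lerD2l lerD2r mulr2n mulrDl mul1r lerD //.
- have := CS (ent x) (ent y).
  rewrite -!enorm_sq -exprMn => H.
  apply: le_trans (ler_norm _) _.
  by rewrite -(ler_sqr) ?nnegrE ?mulr_ge0 ?enorm_ge0 // real_normK ?num_real.
- have := CS (ent x) (ent y).
  rewrite -!enorm_sq -exprMn => H.
  apply: le_trans (ler_norm _) _.
  by rewrite -(ler_sqr) ?nnegrE ?mulr_ge0 ?enorm_ge0 // real_normK ?num_real.
Qed.

Lemma enorm_eq0 x : enorm x = 0 -> x = 0.
Proof.
move=> /eqP; rewrite enormE sqrtr_eq0 => H.
have H0 : \sum_i ent x i ^+ 2 = 0 by apply/eqP; rewrite eq_le H sumsq_ge0.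
apply/matrixP => i j; rewrite (ord1 i) mxE.
move/eqP: H0; rewrite psumr_eq0; last by move=> k _; exact: sqr_ge0.
by move=> /allP /(_ j (mem_index_enum j)) /=; rewrite sqrf_eq0 => /eqP.
Qed.

Lemma enorm_tri x y z : enorm (x - z) <= enorm (x - y) + enorm (y - z).
Proof. by have := enormD (x - y) (y - z); rewrite addrA subrK. Qed.


Definition ballR (c : R) : set 'rV[R]_n := [set x | enorm x <= c].

Lemma scaled_ballE (c : R) : 0 <= c -> @scaled_ball R n c = ballR c.
Proof.
move=> c0; apply/seteqP; split => x /=.
- case=> b; rewrite /unit_ball /= => b1 <-; rewrite /ballR /= enormZ ger0_norm //.
  by rewrite -[c in _ <= c]mulr1 ler_wpM2l.
- rewrite /ballR /= => xc.
  have [cz|cp] := eqVneq c 0.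
    have x0 : x = 0.
      by apply: enorm_eq0; apply/eqP; rewrite eq_le enorm_ge0 andbT -cz.
    exists 0; first by rewrite /unit_ball /= enorm0 ler01.
    by rewrite scaler0 x0.
  have cpos : 0 < c by rewrite lt_def cp c0.
  exists (c^-1 *: x).
    rewrite /unit_ball /= enormZ ger0_norm ?invr_ge0 //.
    by rewrite mulrC ler_pdivrMr // mul1r.
  by rewrite scalerA divff // scale1r.
Qed.

Lemma K0n_ball (K : set 'rV[R]_n) (c : R) : 0 <= c -> K0n K -> K0n (K `&` ballR c).
Proof.
move=> c0 [[_ [Kcl Kcv]] K0].
split; last by split => //; rewrite /ballR /= enorm0.
split; first by exists 0; split => //; rewrite /ballR /= enorm0.
split.
- move=> x Hx; split.
    apply: Kcl => e e0; have [a [Ka _] h] := Hx e e0; by exists a.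
  rewrite /ballR /=; apply/ler_addgt0Pr => e e0.
  have [a [_ ac] h] := Hx e e0.
  have := enorm_tri x a 0; rewrite !subr0 => H.
  apply: (le_trans H); rewrite addrC; apply: lerD => //; exact: ltW.
- move=> a b [Ka ac] [Kb bc] t /andP[t0 t1]; apply: conj; first by apply: Kcv => //; rewrite t0 t1.
  rewrite /ballR /=.
  apply: le_trans (enormD _ _) _.
  rewrite !enormZ !ger0_norm ?subr_ge0 //.
  have h1 : t * enorm a <= t * c by rewrite ler_wpM2l.
  have h2 : (1 - t) * enorm b <= (1 - t) * c by rewrite ler_wpM2l // subr_ge0.
  apply: le_trans (lerD h1 h2) _; by rewrite -mulrDl subrKC mul1r.
Qed.

Lemma dist_le (x : 'rV[R]_n) {A : set 'rV[R]_n} {a} : A a -> dist_set x A <= enorm (x - a).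
Proof.
move=> Aa; apply: (ge_inf (E := [set enorm (x - a) | a in A])).
  by exists 0 => _ [b _ <-]; exact: enorm_ge0.
by exists a.
Qed.

Lemma dist_ge0 (x : 'rV[R]_n) (A : set 'rV[R]_n) : A !=set0 -> 0 <= dist_set x A.
Proof.
move=> [a Aa]; apply: lb_le_inf; first by exists (enorm (x - a)), a.
by move=> _ [b _ <-]; exact: enorm_ge0.
Qed.

Lemma dist_lt (x : 'rV[R]_n) {A : set 'rV[R]_n} {v} : A !=set0 -> dist_set x A < v ->
  exists2 a, A a & enorm (x - a) < v.
Proof.
move=> [a Aa] H; have [_ [b Ab <-] h] := inf_lt (ex_intro _ (enorm (x - a)) (ex_intro2 _ _ a Aa erefl)) H.
by exists b.
Qed.

Lemma dist_in (a : 'rV[R]_n) (A : set 'rV[R]_n) : A a -> dist_set a A = 0.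
Proof.
move=> Aa; apply/eqP; rewrite eq_le dist_ge0; last by exists a.
by have := dist_le a Aa; rewrite subrr enorm0 => ->.
Qed.

Definition nearS (A B : set 'rV[R]_n) (rad del : R) :=
  forall a, A a -> enorm a <= rad -> exists2 b, B b & enorm (a - b) <= del.

Lemma dist_near {A B : set 'rV[R]_n} {J d rad : R} :
  B !=set0 -> (forall x, enorm x < J -> `|dist_set x A - dist_set x B| < d) ->
  rad < J -> nearS A B rad d.
Proof.
move=> Bn H rJ a Aa ar.
have := H a (le_lt_trans ar rJ); rewrite dist_in // sub0r normrN => h.
have [b Bb hb] := dist_lt a Bn (le_lt_trans (ler_norm _) h).
by exists b => //; exact: ltW.
Qed.

Lemma near_dist1 {A B : set 'rV[R]_n} {rad del M : R} {x} :
  A 0 -> B 0 -> nearS A B rad del -> 2 * M + 1 <= rad -> enorm x < M ->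
  dist_set x B <= dist_set x A + del.
Proof.
move=> A0 B0 H hr xM.
apply/ler_addgt0Pr => eta eta0.
set eta' := Order.min eta 1.
have eta'0 : 0 < eta' by rewrite lt_min eta0 ltr01.
have eta'1 : eta' <= 1 by rewrite ge_min lexx orbT.
have eta'e : eta' <= eta by rewrite ge_min lexx.
have hlt : dist_set x A < dist_set x A + eta' by rewrite ltrDl.
have [a Aa ha] := dist_lt x (ex_intro _ 0 A0) hlt.
have dA := dist_le x A0; rewrite subr0 in dA.
have ar : enorm a <= rad.
  have := enorm_tri a x 0; rewrite !subr0 enormB => t.
  apply: (le_trans t); apply: le_trans hr.
  have : enorm (x - a) < enorm x + 1.
    by apply: (lt_le_trans ha); apply: lerD.
  move=> h; apply: ltW.
  have : enorm (x - a) + enorm x < enorm x + 1 + enorm x by rewrite ltrD2r.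
  move=> h2; apply: (lt_le_trans h2).
  have ex0 := enorm_ge0 x.
  have : enorm x <= M by exact: ltW.
  move=> h3; lra.
have [b Bb hb] := H a Aa ar.
apply: le_trans (dist_le x Bb) _.
apply: le_trans (enorm_tri x a b) _.
rewrite -addrA [del + _]addrC addrA.
apply: lerD => //; apply: le_trans (ltW ha) _; exact: lerD.
Qed.

Lemma near_dist {A B : set 'rV[R]_n} {rad del M : R} {x} :
  A 0 -> B 0 -> nearS A B rad del -> nearS B A rad del -> 2 * M + 1 <= rad -> enorm x < M ->
  `|dist_set x A - dist_set x B| <= del.
Proof.
move=> A0 B0 H1 H2 hr xM.
have h1 := near_dist1 A0 B0 H1 hr xM.
have h2 := near_dist1 B0 A0 H2 hr xM.
rewrite ler_distl; apply/andP; split.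
  lra.
lra.
Qed.


Lemma shrink {B : set 'rV[R]_n} {b : 'rV[R]_n} {rho : R} :
  convex_set_R B -> B 0 -> B b -> 0 <= rho ->
  exists2 b', (B `&` ballR rho) b' &
    (forall u, 0 <= u -> enorm b - rho <= u -> enorm (b - b') <= u).
Proof.
move=> Bcv B0 Bb rho0.
have [bl|bg] := leP (enorm b) rho.
  by exists b => // u u0 _; rewrite subrr enorm0.
have nb0 : 0 < enorm b by apply: le_lt_trans bg.
set s := rho / enorm b.
have s0 : 0 <= s by rewrite divr_ge0 // ltW.
have s1 : s <= 1 by rewrite ler_pdivrMr // mul1r ltW.
exists (s *: b).
  split.
    have := Bcv b 0 Bb B0 s; rewrite s0 s1 /= scaler0 addr0; exact.
  by rewrite /ballR /= enormZ ger0_norm // /s divfK // gt_eqF.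
move=> u u0 hu.
have -> : b - s *: b = (1 - s) *: b by rewrite scalerBl scale1r.
rewrite enormZ ger0_norm ?subr_ge0 // mulrBl mul1r /s divfK ?gt_eqF //.
Qed.

Lemma near_ball {A B : set 'rV[R]_n} {rho rho' del rad : R} :
  convex_set_R B -> B 0 -> 0 <= rho -> 0 <= rho' -> nearS A B rho del ->
  nearS (A `&` ballR rho) (B `&` ballR rho') rad (2 * del + `|rho - rho'|).
Proof.
move=> Bcv B0 r0 r'0 H a [Aa ar] _.
have [b Bb hb] := H a Aa ar.
have d0 : 0 <= del by apply: le_trans hb; exact: enorm_ge0.
have nb : enorm b <= rho + del.
  have := enorm_tri b a 0; rewrite !subr0 enormB => t.
  apply: (le_trans t); rewrite addrC; exact: lerD.
have [b' Bb' hb'] := shrink Bcv B0 Bb r'0.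
exists b' => //.
have u0 : 0 <= del + `|rho - rho'| by rewrite addr_ge0.
have hu : enorm b - rho' <= del + `|rho - rho'|.
  have := ler_norm (rho - rho'); lra.
have := hb' _ u0 hu => h.
apply: le_trans (enorm_tri a b b') _.
have := lerD hb h; lra.
Qed.

Lemma near_bigball {A B : set 'rV[R]_n} {rho' del rad : R} :
  nearS A B rad del -> del <= 1 -> rad + 1 <= rho' ->
  nearS A (B `&` ballR rho') rad del.
Proof.
move=> H d1 hr a Aa ar.
have [b Bb hb] := H a Aa ar.
exists b => //; split => //; rewrite /ballR /=.
have := enorm_tri b a 0; rewrite !subr0 enormB => t.
apply: (le_trans t); have := lerD ar hb; lra.
Qed.

Lemma near_sub {A B C : set 'rV[R]_n} {rad del : R} :
  nearS A B rad del -> nearS (A `&` C) B rad del.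
Proof. by move=> H a [Aa _]; exact: H. Qed.

Lemma dAW_lt {K K' : set 'rV[R]_n} {J : nat} {d : R} :
  (1 <= J)%N -> d <= J%:R^-1 -> (dAW K K' < d%:E)%E ->
  forall x, enorm x < J%:R -> `|dist_set x K - dist_set x K'| < d.
Proof.
move=> J1 dJ H x xJ.
set S := ereal_sup [set (`| dist_set x K - dist_set x K' |)%:E
                             | x in [set x : 'rV[R]_n | enorm x < J%:R]].
have h1 : (Order.min ((J%:R)^-1 : R)%:E S <= dAW K K')%E.
  by apply: ereal_sup_ubound; exists J.
have h2 := le_lt_trans h1 H.
rewrite gt_min in h2.
case/orP: h2 => [|h2].
  by rewrite lte_fin => h; have := lt_le_trans h dJ; rewrite ltxx.
have h3 : ((`| dist_set x K - dist_set x K' |)%:E <= S)%E.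
  by apply: ereal_sup_ubound; exists x.
by rewrite -lte_fin; exact: le_lt_trans h3 h2.
Qed.

Lemma near_dAW (e : R) : 0 < e -> exists2 rad : R, 0 <= rad &
  forall (A B : set 'rV[R]_n) del, A 0 -> B 0 -> del <= e / 2 ->
    nearS A B rad del -> nearS B A rad del -> (dAW A B < e%:E)%E.
Proof.
move=> e0.
have [M HM] : exists M : nat, 2 / e < M.+1%:R by exists (Num.truncn (2 / e)); exact: truncnS_gt.
have Mpos : 0 < M.+1%:R :> R by rewrite ltr0n.
have Minv : (M.+1%:R)^-1 <= e / 2 :> R.
  rewrite -[e / 2]invf_div lef_pV2 ?posrE ?divr_gt0 //; exact: ltW.
exists (2 * M.+1%:R + 1); first by rewrite addr_ge0 // mulr_ge0.
move=> A B del A0 B0 de H1 H2.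
apply: (le_lt_trans (y := (e / 2)%:E)); last by rewrite lte_fin ltr_pdivrMr // ltr_pMr // ltr1n.
apply: ge_ereal_sup => _ [j /= j1 <-].
have [Mj|jM] := leqP M.+1 j.
  rewrite ge_min; apply/orP; left; rewrite lee_fin; apply: le_trans Minv.
  by rewrite lef_pV2 ?posrE ?ltr0n // ler_nat.
rewrite ge_min; apply/orP; right.
apply: ge_ereal_sup => _ [x /= xj <-].
rewrite lee_fin; apply: le_trans de.
apply: (near_dist A0 B0 H1 H2 (lexx _)).
apply: lt_le_trans xj _; rewrite ler_nat; exact: ltnW.
Qed.

End Enorm.

Theorem lemma3p1 (R : realType) (n : nat) (r : R -> R)
  (hn : (2 <= n)%N)
  (r_cont : {within `]0, 1], continuous r})
  (r_nonneg : forall t : R, 0 < t <= 1 -> 0 <= r t)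
  (r1 : r 1 = 0)
  (r_lim0 : r x @[x --> 0^'+] --> +oo)
  (r_pos : forall t : R, 0 < t < 1 -> 0 < r t) :
  (forall (K : set 'rV[R]_n) (t : R), K0n K -> 0 <= t <= 1 -> K0n (Fmap r K t)) /\
  (forall (K : set 'rV[R]_n) (t : R), K0n K -> 0 <= t <= 1 ->
    forall e : R, 0 < e -> exists2 d : R, 0 < d &
      forall (K' : set 'rV[R]_n) (t' : R), K0n K' -> 0 <= t' <= 1 ->
        (dAW K K' < d%:E)%E -> `|t - t'| < d ->
        (dAW (Fmap r K t) (Fmap r K' t') < e%:E)%E).
Proof.
split.
  move=> K t HK /andP[t0 t1]; rewrite /Fmap.
  have [//|tn0] := eqVneq t 0.
  have tpos : 0 < t by rewrite lt_def tn0 t0.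
  rewrite scaled_ballE; last by apply: r_nonneg; rewrite tpos t1.
  apply: K0n_ball => //; apply: r_nonneg; by rewrite tpos t1.
move=> K t [[Kne [Kcl Kcv]] K0] /andP[t0 t1] e e0.
have [R0 R00 HR0] := @near_dAW R n e e0.
have [tz|tn0] := eqVneq t 0.
  have [g g0 Hg] := @lim_eps R r r_lim0 (R0 + 1).
  have [J HJ] : exists J : nat, R0 < J.+1%:R by exists (Num.truncn R0); exact: truncnS_gt.
  set d := Order.min (Order.min 1 (e / 2)) (Order.min g (J.+1%:R^-1)).
  have Jpos : 0 < J.+1%:R^-1 :> R by rewrite invr_gt0 ltr0n.
  have d1 : d <= 1 by rewrite /d !ge_min lexx !(orbT, orTb).
  have de : d <= e / 2 by rewrite /d !ge_min lexx !(orbT, orTb).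
  have dg : d <= g by rewrite /d !ge_min lexx !(orbT, orTb).
  have dJ : d <= J.+1%:R^-1 by rewrite /d !ge_min lexx !(orbT, orTb).
  have e2 : 0 < e / 2 by rewrite divr_gt0.
  exists d; first by rewrite /d !lt_min ltr01 g0 Jpos e2.
  move=> K' t' [[K'ne [K'cl K'cv]] K'0] /andP[t'0 t'1] hAW ht.
  have Hd := dAW_lt (isT : (1 <= J.+1)%N) dJ hAW.
  have Hd' : forall x, enorm x < J.+1%:R -> `|dist_set x K' - dist_set x K| < d.
    by move=> x hx; rewrite distrC; exact: Hd.
  have n1 : nearS K K' R0 d := dist_near K'ne Hd HJ.
  have n2 : nearS K' K R0 d := dist_near Kne Hd' HJ.
  rewrite /Fmap tz eqxx.
  case: ifP => [_|/negbT t'n0]; first exact: (HR0 _ _ d).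
  have t'pos : 0 < t' by rewrite lt_def t'n0 t'0.
  have hr : R0 + 1 <= r t'.
    apply: Hg; rewrite t'pos /=.
    by move: ht; rewrite tz sub0r normrN gtr0_norm // => h; apply: lt_le_trans dg.
  have r'0 : 0 <= r t' by apply: r_nonneg; rewrite t'pos t'1.
  rewrite scaled_ballE //.
  apply: (HR0 _ _ d) => //.
  - by split => //; rewrite /ballR /= enorm0.
  - exact: near_bigball.
  - exact: near_sub.
have tpos : 0 < t by rewrite lt_def tn0 t0.
have rho0 : 0 <= r t by apply: r_nonneg; rewrite tpos t1.
have tin : [set` `]0, 1%R]] t by rewrite /= in_itv /= tpos t1.
have e4 : 0 < e / 4 by rewrite divr_gt0.
have [g g0 Hg] := @cont_eps R r _ t r_cont tin _ e4.
have [J HJ'] : exists J : nat, r t + e / 4 < J.+1%:R by exists (Num.truncn (r t + e / 4)); exact: truncnS_gt.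
have HJ : r t < J.+1%:R by apply: le_lt_trans HJ'; rewrite lerDl ltW.
set d := Order.min (Order.min (J.+1%:R^-1) (e / 8)) (Order.min (t / 2) g).
have Jpos : 0 < J.+1%:R^-1 :> R by rewrite invr_gt0 ltr0n.
have de : d <= e / 8 by rewrite /d !ge_min lexx !(orbT, orTb).
have dt : d <= t / 2 by rewrite /d !ge_min lexx !(orbT, orTb).
have dg : d <= g by rewrite /d !ge_min lexx !(orbT, orTb).
have dJ : d <= J.+1%:R^-1 by rewrite /d !ge_min lexx !(orbT, orTb).
have e8 : 0 < e / 8 by rewrite divr_gt0.
have t2 : 0 < t / 2 by rewrite divr_gt0.
exists d; first by rewrite /d !lt_min Jpos g0 e8 t2.
move=> K' t' [[K'ne [K'cl K'cv]] K'0] /andP[t'0 t'1] hAW ht.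
have Hd := dAW_lt (isT : (1 <= J.+1)%N) dJ hAW.
have Hd' : forall x, enorm x < J.+1%:R -> `|dist_set x K' - dist_set x K| < d.
  by move=> x hx; rewrite distrC; exact: Hd.
have n1 : nearS K K' (r t) d := dist_near K'ne Hd HJ.
have t'pos : 0 < t'.
  have := ler_norm (t - t'); lra.
have t'n0 : t' != 0 by rewrite gt_eqF.
have r'0 : 0 <= r t' by apply: r_nonneg; rewrite t'pos t'1.
have t'in : [set` `]0, 1%R]] t' by rewrite /= in_itv /= t'pos t'1.
have hrr := Hg t' t'in (lt_le_trans ht dg).
have HJ2 : r t' < J.+1%:R.
  apply: le_lt_trans HJ'; have := ler_norm (r t' - r t); rewrite distrC in hrr; lra.
have n2 : nearS K' K (r t') d := dist_near Kne Hd' HJ2.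
rewrite /Fmap (negbTE tn0) (negbTE t'n0) !scaled_ballE //.
apply: (HR0 _ _ (2 * d + `|r t - r t'|)).
- by split => //; rewrite /ballR /= enorm0.
- by split => //; rewrite /ballR /= enorm0.
- lra.
- exact: near_ball.
- rewrite distrC; exact: near_ball.
Qed.
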